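(* Let $G$ be a simple graph that is either a tree, or is connected and contains exactly one cycle $C$, where $C$ is not a 3-cycle. Form $G'$ from $G$ by adding a new vertex $v$ adjacent to at most four vertices of $G$, at least one of which lies on $C$ if $C$ exists. Then $G'$ has a near-bipartite coloring $I,F$ with $I\subseteq N_{G'}(v)$.
   Context: A near-bipartite coloring of a graph is a partition of its vertex set into $I,F$ with $I$ independent and the subgraph induced by $F$ a forest. *)

(* Defs.v *)
(* Finite simple graphs: symmetric irreflexive e : rel T on a finType T. *)
From mathcomp Require Import all_boot.
Set Implicit Arguments. Unset Strict Implicit. Unset Printing Implicit Defensive.

Section Graphs.
Variable T : finType.
Implicit Types (e : rel T) (S I F : {set T}) (c : seq T).

Definition induced e S : rel T := fun x y => [&& x \in S, y \in S & e x y].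

Definition is_cycle_in e S c : bool :=
  [&& 2 < size c, ucycleb e c & all (fun x => x \in S) c].

Definition forest_on e S : Prop := forall c, ~~ is_cycle_in e S c.

Definition connected_on e S : Prop :=
  S != set0 /\ forall x y, x \in S -> y \in S -> connect (induced e S) x y.

Definition tree_on e S : Prop := connected_on e S /\ forest_on e S.

Definition cycle_edge c (x y : T) : bool :=
  ((x \in c) && (y == next c x)) || ((y \in c) && (x == next c y)).

(* c is the unique cycle of the subgraph induced by S (cycles are compared as
   subgraphs, i.e. by their edge sets) *)
Definition unique_cycle_on e S c : Prop :=
  is_cycle_in e S c /\ forall c', is_cycle_in e S c' -> cycle_edge c' =2 cycle_edge c.

Definition independent e I : Prop := forall x y, x \in I -> y \in I -> ~~ e x y.

Definition near_bipartite_coloring e I F : Prop :=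
  [disjoint I & F] /\ I :|: F = setT /\ independent e I /\ forest_on e F.

End Graphs.

(* Main.v *)
Require Import Defs.
From mathcomp Require Import all_boot.
Set Implicit Arguments. Unset Strict Implicit. Unset Printing Implicit Defensive.

Lemma next_at_last (T : eqType) (x0 y : T) p : uniq (y :: p) -> next_at (last y p) x0 y p = x0.
Proof.
elim: p y => [|y' p IH] y /=; first by rewrite eqxx.
case/andP => yn up.
have -> : (last y' p == y) = false.
  apply/negbTE; apply: contra yn => /eqP <-; exact: mem_last.
exact: IH.
Qed.

Lemma next_last_uniq (T : eqType) (x : T) p : uniq (x :: p) -> next (x :: p) (last x p) = x.
Proof. exact: next_at_last. Qed.

Section Main.
Variables (T : finType) (e : rel T) (v : T).
Hypotheses (e_sym : symmetric e) (e_irr : irreflexive e).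
Local Notation S := [set x : T | x != v].
Local Notation N := [set u : T | e v u].

Lemma path_all_snd (r : rel T) (P : pred T) x p : (forall y z, r y z -> P z) -> path r x p -> all P p.
Proof. move=> H; elim: p x => //= y p IH x /andP[rxy pp]; rewrite (H _ _ rxy); exact: IH pp. Qed.

Lemma path_induced (P : {set T}) x p : path e x p -> all (mem P) (x :: p) -> path (induced e P) x p.
Proof.
elim: p x => //= y p IH x /andP[exy pp] /and3P[xP yP ap].
rewrite /induced xP yP exy /=; apply: IH => //=; by rewrite yP.
Qed.

Lemma cycle_edge_mem (c : seq T) (x y : T) : cycle_edge c x y -> (x \in c) && (y \in c).
Proof. by rewrite /cycle_edge => /orP[/andP[xc /eqP->]|/andP[yc /eqP->]]; rewrite mem_next ?xc ?yc. Qed.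

Lemma cycle_edge_next (c : seq T) (x : T) : x \in c -> cycle_edge c x (next c x).
Proof. by move=> xc; rewrite /cycle_edge xc eqxx. Qed.

Lemma EL (P : {set T}) (a b : T) : e a b -> a \in P -> b \in P ->
  connect (fun x y => induced e P x y && ~~ (((x == a) && (y == b)) || ((x == b) && (y == a)))) a b ->
  exists c, is_cycle_in e P c /\ cycle_edge c b a.
Proof.
move=> eab aP bP /connectP [p pp lp].
case: (shortenP pp) lp => p' pp' up' _ lp.
have eP : subrel (fun x y => induced e P x y && ~~ (((x == a) && (y == b)) || ((x == b) && (y == a)))) e.
  by move=> y z /andP[/and3P[]].
exists (a :: p'); split.
- rewrite /is_cycle_in /ucycleb up' andbT; apply/and3P; split.
  + case: p' pp' up' lp {eP} => [|y [|z q]] //=.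
      by move=> _ _ lab; rewrite -lab e_irr in eab.
    by move=> /andP [H _] _ lyb; move: H; rewrite -lyb !eqxx /= andbF.
  + by rewrite /= rcons_path (sub_path eP pp') /= -lp e_sym.
  + rewrite /= aP /=; apply: (@path_all_snd _ (fun x => x \in P) a) pp' => y z /andP [/and3P[]] //.
- by rewrite /cycle_edge lp next_last_uniq // mem_last eqxx.
Qed.

Lemma is_cycle_sub (P Q : {set T}) (c : seq T) : P \subset Q -> is_cycle_in e P c -> is_cycle_in e Q c.
Proof.
move=> PQ /and3P[s u a]; rewrite /is_cycle_in s u; apply/allP => x xc.
exact: (subsetP PQ) ((allP a) x xc).
Qed.

Lemma uc_sub (C : seq T) (P : {set T}) (c : seq T) : unique_cycle_on e S C -> P \subset S -> is_cycle_in e P c ->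
  (forall z, z \in C -> z \in P) /\ (forall x y, cycle_edge c x y -> cycle_edge C x y).
Proof.
move=> [_ HC] PS cP; have cS := is_cycle_sub PS cP.
have Hce := HC _ cS.
split; last by move=> x y; rewrite Hce.
move=> z zC; have := cycle_edge_next zC; rewrite -Hce => /cycle_edge_mem /andP[zc _].
by case/and3P: cP => _ _ /allP; apply.
Qed.


Lemma good (I : {set T}) : I \subset N -> independent e I ->
  (forall c, ~~ is_cycle_in e (S :\: I) c) ->
  (forall r1 r2, r1 \in N -> r2 \in N -> r1 \notin I -> r2 \notin I -> r1 != r2 ->
      ~~ connect (induced e (S :\: I)) r1 r2) ->
  near_bipartite_coloring e I (~: I).
Proof.
move=> IN Iind Hcyc HR; split; first by rewrite disjoints_subset setCK.
split; first exact: setUCr.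
split => // c; apply/negP => cyc.
have vI : v \notin I by apply/negP => /(subsetP IN); rewrite inE e_irr.
case vc: (v \in c); last first.
  have : is_cycle_in e (S :\: I) c.
    case/and3P: cyc => s u a; rewrite /is_cycle_in s u /=; apply/allP => x xc.
    have := allP a x xc; rewrite !inE => ->; rewrite andTb.
    by apply/eqP => xv; rewrite -xv xc in vc.
  by rewrite (negbTE (Hcyc c)).
case: (rot_to vc) => i q Hq.
have : is_cycle_in e (~: I) (v :: q).
  by rewrite -Hq; move: cyc; rewrite /is_cycle_in size_rot /ucycleb rot_cycle rot_uniq (eq_all_r (mem_rot _ _)).
case: q {Hq} => [|r1 q]; first by case/and3P.
move=> /and3P [sz /andP [cy un] al].
rewrite /= rcons_path in cy; case/and3P: cy => evr1 pq elast.
move: un => /= /andP [vn /andP [r1nq uq]].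
have qn : q != [::] by move: sz; case: (q).
set r2 := last r1 q.
have r2q : r2 \in q by rewrite /r2; case: (q) qn => // y q' _; rewrite /= mem_last.
have r12 : r1 != r2 by apply: contraNneq r1nq => ->.
have alI : forall y, y \in r1 :: q -> (y \in S :\: I).
  move=> y yq; have := allP al y; rewrite in_cons yq orbT => /(_ isT).
  rewrite !inE => ->; rewrite andTb.
  by apply/eqP => yv; rewrite -yv yq in vn.
apply: (negP (HR r1 r2 _ _ _ _ r12)).
- by rewrite inE.
- by rewrite inE e_sym.
- by move: (alI r1 (mem_head _ _)); rewrite in_setD => /andP[].
- by move: (alI r2); rewrite in_cons r2q orbT in_setD => /(_ isT) /andP[].
- apply/connectP; exists q => //; apply: path_induced => //.
  by apply/allP => y; apply: alI.
Qed.


Lemma induced_sym (P : {set T}) : symmetric (induced e P).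
Proof. by move=> y z; rewrite /induced e_sym; case: (y \in P); case: (z \in P). Qed.

Lemma Nv y : y \in N -> y != v.
Proof. by rewrite inE; apply: contraTneq => ->; rewrite e_irr. Qed.

Lemma CC x x' s s' : e x x' -> x \in N -> x' \in N -> x != s -> x' != s ->
  connect (induced e (S :\: [set x; s])) x' s' ->
  connect (induced e (S :\: [set x'; s])) x s' ->
  exists c, is_cycle_in e (S :\: [set s]) c /\ cycle_edge c x' x.
Proof.
move=> exx' xN x'N xs x's c1 c2.
have xS : x \in S :\: [set s] by rewrite !inE xs Nv.
have x'S : x' \in S :\: [set s] by rewrite !inE x's Nv.
apply: EL exx' xS x'S _.
apply: (@connect_trans _ _ s').
- apply: connect_sub c2 => y z /and3P[yS zS eyz]; apply: connect1.
  move: yS zS; rewrite !inE => /andP[/norP[yx' ys] yv] /andP[/norP[zx' zs] zv].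
  by rewrite /induced !inE ys yv zs zv eyz (negbTE yx') (negbTE zx') /= !andbF.
- rewrite (sym_connect_sym (induced_sym _)) in c1.
  apply: connect_sub c1 => y z /and3P[yS zS eyz]; apply: connect1.
  move: yS zS; rewrite !inE => /andP[/norP[yx ys] yv] /andP[/norP[zx zs] zv].
  by rewrite /induced !inE ys yv zs zv eyz (negbTE yx) (negbTE zx) /= !andbF.
Qed.

Definition indepb (X : {set T}) := [forall y in X, forall z in X, ~~ e y z].

Lemma indepP X : reflect (independent e X) (indepb X).
Proof.
apply: (iffP forall_inP) => H.
  by move=> y z yX zX; exact: (forall_inP (H y yX)) z zX.
by move=> y yX; apply/forall_inP => z zX; exact: H.
Qed.

Lemma edge_in X : ~~ indepb X -> exists y z, [/\ y \in X, z \in X & e y z].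
Proof.
move/indepP => H.
case: (boolP [exists y in X, exists z in X, e y z]).
  by case/exists_inP => y yX /exists_inP [z zX eyz]; exists y, z.
rewrite negb_exists_in => /forall_inP H2; exfalso; apply: H => y z yX zX.
by have := H2 y yX; rewrite negb_exists_in => /forall_inP; apply.
Qed.


Lemma neq_e x y : e x y -> x != y.
Proof. by apply: contraTneq => ->; rewrite e_irr. Qed.

Lemma tri_cycle x y z : x \in N -> y \in N -> z \in N -> e x y -> e y z -> e x z ->
  is_cycle_in e S [:: x; y; z].
Proof.
move=> xN yN zN exy eyz exz.
rewrite /is_cycle_in /ucycleb /= exy eyz (e_sym z) exz !inE !negb_or.
by rewrite (neq_e exy) (neq_e eyz) (neq_e exz) !Nv.
Qed.

Definition conn p q r1 r2 := connect (induced e (S :\: [set p; q])) r1 r2.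

Lemma connS p q r1 r2 : conn p q r1 r2 = conn p q r2 r1.
Proof. exact: (sym_connect_sym (induced_sym _)). Qed.

Lemma connP p q r1 r2 : conn p q r1 r2 = conn q p r1 r2.
Proof. by rewrite /conn setUC. Qed.

Lemma bool_match (ab ac ad bc bd cd : bool) :
  [|| bc, bd | cd] -> [|| ac, ad | cd] -> [|| ab, ad | bd] -> [|| ab, ac | bc] ->
  ~~ [&& ab, bc & ac] -> ~~ [&& ab, bd & ad] -> ~~ [&& ac, cd & ad] -> ~~ [&& bc, cd & bd] ->
  [|| ab && cd, ac && bd | ad && bc].
Proof. by case: ab; case: ac; case: ad; case: bc; case: bd; case: cd. Qed.

Lemma boolcfg (ac ad bc bd cAC cAD cBC cBD ia ib ic id : bool) :
  (ac -> cBD) -> (bd -> cAC) -> (ad -> cBC) -> (bc -> cAD) ->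
  (cAC -> cAD -> [&& ~~ ia, ic & id]) ->
  (cAC -> cBC -> [&& ~~ ic, ia & ib]) ->
  (cBD -> cAD -> [&& ~~ id, ia & ib]) ->
  (cBD -> cBC -> [&& ~~ ib, ic & id]) ->
  ~~ (ac && bc) -> ~~ (ad && bd) -> ~~ (ac && ad) -> ~~ (bc && bd) ->
  [|| ia, ib, ic | id] ->
  [|| [&& ~~ ac, ~~ cAC & ia || ic], [&& ~~ ad, ~~ cAD & ia || id],
      [&& ~~ bc, ~~ cBC & ib || ic] | [&& ~~ bd, ~~ cBD & ib || id]].
Proof.
by case: ac; case: ad; case: bc; case: bd; case: cAC; case: cAD; case: cBC; case: cBD;
  case: ia; case: ib; case: ic; case: id => //= /(_ isT) // /(_ isT).
Qed.

Lemma boolcfgE (ac ad bc bd cAC cAD cBC cBD ia ib ic id : bool) (G : Prop) :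
  (ac -> cBD) -> (bd -> cAC) -> (ad -> cBC) -> (bc -> cAD) ->
  (cAC -> cAD -> [&& ~~ ia, ic & id]) ->
  (cAC -> cBC -> [&& ~~ ic, ia & ib]) ->
  (cBD -> cAD -> [&& ~~ id, ia & ib]) ->
  (cBD -> cBC -> [&& ~~ ib, ic & id]) ->
  ~~ (ac && bc) -> ~~ (ad && bd) -> ~~ (ac && ad) -> ~~ (bc && bd) ->
  [|| ia, ib, ic | id] ->
  ([&& ~~ ac, ~~ cAC & ia || ic] -> G) -> ([&& ~~ ad, ~~ cAD & ia || id] -> G) ->
  ([&& ~~ bc, ~~ cBC & ib || ic] -> G) -> ([&& ~~ bd, ~~ cBD & ib || id] -> G) -> G.
Proof.
move=> h1 h2 h3 h4 h5 h6 h7 h8 h9 h10 h11 h12 h13 g1 g2 g3 g4.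
by case/or4P: (boolcfg h1 h2 h3 h4 h5 h6 h7 h8 h9 h10 h11 h12 h13).
Qed.

Section Core.
Variable inC : pred T.
Hypothesis H1 : forall I : {set T}, (exists y, y \in I /\ inC y) ->
  forall c, ~~ is_cycle_in e (S :\: I) c.
Hypothesis H2 : forall (P : {set T}) c x y, P \subset S -> is_cycle_in e P c ->
  cycle_edge c x y -> (forall z, inC z -> z \in P) /\ inC x /\ inC y.
Hypothesis H3 : exists u, e v u && inC u.
Hypothesis H4 : forall x y z, x \in N -> y \in N -> z \in N -> e x y -> e y z -> e x z -> False.

Lemma good2 p q p' q' : (forall y, y \in N -> [|| y == p, y == q, y == p' | y == q']) ->
  p \in N -> q \in N -> ~~ e p q -> (inC p || inC q) -> ~~ conn p q p' q' ->
  exists I F : {set T}, near_bipartite_coloring e I F /\ I \subset N.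
Proof.
move=> HN pN qN npq ipq ncon; exists [set p; q], (~: [set p; q]).
have sub : [set p; q] \subset N by apply/subsetP => y /set2P[]->.
split => //; apply: good => //.
- by move=> y z /set2P[]-> /set2P[]->; rewrite ?e_irr // e_sym.
- by move=> c; apply: H1; case/orP: ipq => ?; [exists p | exists q]; rewrite !inE eqxx ?orbT.
- move=> r1 r2 r1N r2N r1I r2I r12.
  have := HN _ r1N; have := HN _ r2N; rewrite !inE in r1I r2I.
  case/norP: r1I => /negbTE-> /negbTE->; case/norP: r2I => /negbTE -> /negbTE-> /=.
  case/orP => /eqP E2; case/orP => /eqP E1; subst r1 r2; rewrite ?eqxx // in r12.
  all: first [exact: ncon | by move: ncon; rewrite connS].
Qed.

Lemma CCC x x' s s' : e x x' -> x \in N -> x' \in N -> x != s -> x' != s ->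
  conn x s x' s' -> conn x' s x s' -> [&& ~~ inC s, inC x & inC x'].
Proof.
move=> exx' xN x'N xs x's c1 c2.
have [c [cyc ce]] := CC exx' xN x'N xs x's c1 c2.
have [Hz [i1 i2]] := H2 (subsetDl _ _) cyc ce.
rewrite i1 i2 !andbT; apply/negP => /Hz; by rewrite !inE eqxx.
Qed.

Lemma config a b c d : (forall y, y \in N -> [|| y == a, y == b, y == c | y == d]) ->
  a \in N -> b \in N -> c \in N -> d \in N -> uniq [:: a; b; c; d] -> e a b -> e c d ->
  [|| inC a, inC b, inC c | inC d] ->
  exists I F : {set T}, near_bipartite_coloring e I F /\ I \subset N.
Proof.
move=> HN aN bN cN dN U eab ecd iC.
move: U; rewrite /= !inE !negb_or => /and4P[/and3P[ab ac ad] /andP[bc bd] cd _].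
have inS : forall y w1 w2, y \in N -> y != w1 -> y != w2 -> y \in S :\: [set w1; w2].
  by move=> y w1 w2 yN y1 y2; rewrite !inE negb_or y1 y2 Nv.
apply: (@boolcfgE (e a c) (e a d) (e b c) (e b d) (conn a c b d) (conn a d b c)
  (conn b c a d) (conn b d a c) (inC a) (inC b) (inC c) (inC d)).
- move=> eac; apply: connect1; rewrite /induced eac !inS // eq_sym //.
- move=> ebd; apply: connect1; rewrite /induced ebd !inS // eq_sym //.
- move=> ead; apply: connect1; rewrite /induced ead !inS // eq_sym //.
- move=> ebc; apply: connect1; rewrite /induced ebc !inS // eq_sym //.
- move=> c1 c2; apply: (@CCC c d a b) => //; rewrite 1?eq_sym // connP connS //.
- by move=> c1 c2; apply: (@CCC a b c d) => //; rewrite eq_sym.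
- move=> c1 c2; rewrite (andbC (inC a)); apply: (@CCC b a d c) => //; by rewrite e_sym.
- move=> c1 c2; rewrite (andbC (inC c)); apply: (@CCC d c b a) => //.
  + by rewrite e_sym.
  + by rewrite eq_sym.
  + by rewrite eq_sym.
  + by rewrite connP connS.
  + by rewrite connP connS.
- by apply/negP => /andP[eac ebc]; apply: (H4 aN bN cN).
- by apply/negP => /andP[ead ebd]; apply: (H4 aN bN dN).
- by apply/negP => /andP[eac ead]; apply: (H4 aN cN dN).
- by apply/negP => /andP[ebc ebd]; apply: (H4 bN cN dN).
- exact: iC.
- case/and3P => nac ncon iac; apply: (@good2 a c b d) => //.
  by move=> y /HN; case: (y == a); case: (y == b); case: (y == c); case: (y == d).
- case/and3P => nad ncon iad; apply: (@good2 a d b c) => //.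
  by move=> y /HN; case: (y == a); case: (y == b); case: (y == c); case: (y == d).
- case/and3P => nbc ncon ibc; apply: (@good2 b c a d) => //.
  by move=> y /HN; case: (y == a); case: (y == b); case: (y == c); case: (y == d).
- case/and3P => nbd ncon ibd; apply: (@good2 b d a c) => //.
  by move=> y /HN; case: (y == a); case: (y == b); case: (y == c); case: (y == d).
Qed.

Lemma ex3 (nind : forall x, ~~ indepb (N :\ x)) x p q r :
  (forall y, (y \in N) = (y \in [:: x; p; q; r])) -> [|| e p q, e p r | e q r].
Proof.
move=> Hs; case: (edge_in (nind x)) => y [z [yN zN eyz]].
move: yN zN; rewrite !in_setD1 !Hs !inE.
move=> /andP[yx /or4P[]/eqP Ey] /andP[zx /or4P[]/eqP Ez]; subst y z;
  first [by rewrite eqxx in yx | by rewrite eqxx in zx | by rewrite e_irr in eyz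
        | by rewrite eyz ?orbT | by rewrite (e_sym p q) eyz | by rewrite (e_sym p r) eyz ?orbT
        | by rewrite (e_sym q r) eyz ?orbT].
Qed.

Lemma core_main : #|N| <= 4 ->
  exists I F : {set T}, near_bipartite_coloring e I F /\ I \subset N.
Proof.
move=> cardN.
have [u /andP [evu iu]] := H3.
have uN : u \in N by rewrite inE.
case: (boolP (indepb N)) => [indN | nindN].
  exists N, (~: N); split => //; apply: good => //.
  - exact/indepP.
  - by move=> c; apply: H1; exists u.
  - by move=> r1 r2 r1N _ r1I; rewrite r1N in r1I.
case: (boolP [exists x, indepb (N :\ x)]) => [/existsP [x indx] | nind].
  case: (boolP [exists y in N :\ x, inC y]) => [/exists_inP [y yN iy] | noC].
    exists (N :\ x), (~: (N :\ x)); split; last exact: subD1set.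
    apply: good; [exact: subD1set | exact/indepP | by move=> c; apply: H1; exists y | ].
    move=> r1 r2 r1N r2N; rewrite !in_setD1 r1N r2N !andbT !negbK => /eqP-> /eqP->.
    by rewrite eqxx.
  have ux : u = x.
    apply/eqP; apply: contraNT noC => ux; apply/exists_inP; exists u => //.
    by rewrite in_setD1 ux.
  subst u.
  set I := [set y in N | ~~ e x y].
  have xI : x \in I by rewrite inE uN e_irr.
  have IN : I \subset N by apply/subsetP => y; rewrite /I inE => /andP[].
  exists I, (~: I); split => //.
  apply: good => //.
  - move=> y z; rewrite /I !inE => /andP[yN nxy] /andP[zN nxz].
    case: (eqVneq y x) => [->|yx]; first by [].
    case: (eqVneq z x) => [->|zx]; first by rewrite e_sym.
    by have Hi := elimT (indepP _) indx; apply: Hi; rewrite in_setD1 ?yx ?zx inE.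
  - by move=> c; apply: H1; exists x.
  - move=> r1 r2 r1N r2N; move: (r1N) (r2N); rewrite /I !inE => e1 e2; rewrite e1 e2 /= !negbK => exr1 exr2 r12.
    apply/negP => con.
    have [c [cyc ce]] : exists c, is_cycle_in e S c /\ cycle_edge c x r1.
      apply: EL; rewrite ?inE ?Nv // ?(e_sym r1) //.
      apply: (@connect_trans _ _ r2).
      + apply: connect_sub con => y z /and3P[yS zS eyz]; apply: connect1.
        move: yS zS; rewrite !inE => /andP[yI yv] /andP[zI zv].
        have yx : y != x by apply: contraNneq yI => ->; rewrite evu e_irr.
        have zx : z != x by apply: contraNneq zI => ->; rewrite evu e_irr.
        by rewrite /induced !inE yv zv eyz (negbTE yx) (negbTE zx) /= !andbF.
      + apply: connect1; rewrite /induced !inE (Nv r2N) Nv // (e_sym r2) exr2 /=.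
        by rewrite eq_sym (negbTE r12) (eq_sym r2) (negbTE (neq_e exr2)) /= ?andbF.
    have [_ [_ ir1]] := H2 (subxx _) cyc ce.
    move/negP: noC; apply; apply/exists_inP; exists r1 => //.
    by rewrite in_setD1 r1N andbT eq_sym neq_e.
have nind' : forall x, ~~ indepb (N :\ x).
  by move=> x; move: nind; rewrite negb_exists => /forallP.
have Hs : forall y, (y \in N) = (y \in enum N) by move=> y; rewrite mem_enum.
have us : uniq (enum N) := enum_uniq _.
have sz : size (enum N) <= 4 by rewrite -cardE.
have uin := uN; rewrite Hs in uin.
move: Hs us sz uin; case: (enum N) => [|a [|b [|c [|d [|f s']]]]] Hs us sz uin //.
- have h := @ex3 nind' a a a a; rewrite e_irr in h; suff : false by [].
  by apply: h => y; rewrite Hs !inE; case: (y == a).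
- have h := @ex3 nind' a b b b; rewrite e_irr in h; suff : false by [].
  by apply: h => y; rewrite Hs !inE; case: (y == a); case: (y == b).
- have h1 := @ex3 nind' a b c c; have h2 := @ex3 nind' b a c c; have h3 := @ex3 nind' c a b b.
  rewrite e_irr !orbF orbb in h1; rewrite e_irr !orbF orbb in h2; rewrite e_irr !orbF orbb in h3.
  have aN : a \in N by rewrite Hs !inE eqxx.
  have bN : b \in N by rewrite Hs !inE eqxx ?orbT.
  have cN : c \in N by rewrite Hs !inE eqxx ?orbT.
  exfalso; apply: (H4 aN bN cN).
  + by apply: h3 => y; rewrite Hs !inE; case: (y == a); case: (y == b); case: (y == c).
  + by apply: h1 => y; rewrite Hs !inE; case: (y == a); case: (y == b); case: (y == c).
  + by apply: h2 => y; rewrite Hs !inE; case: (y == a); case: (y == b); case: (y == c).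
- have aN : a \in N by rewrite Hs !inE eqxx.
  have bN : b \in N by rewrite Hs !inE eqxx ?orbT.
  have cN : c \in N by rewrite Hs !inE eqxx ?orbT.
  have dN : d \in N by rewrite Hs !inE eqxx ?orbT.
  have h1 := @ex3 nind' a b c d Hs.
  have h2 : [|| e a c, e a d | e c d].
    apply: (@ex3 nind' b a c d) => y; rewrite Hs !inE.
    by case: (y == a); case: (y == b); case: (y == c); case: (y == d).
  have h3 : [|| e a b, e a d | e b d].
    apply: (@ex3 nind' c a b d) => y; rewrite Hs !inE.
    by case: (y == a); case: (y == b); case: (y == c); case: (y == d).
  have h4 : [|| e a b, e a c | e b c].
    apply: (@ex3 nind' d a b c) => y; rewrite Hs !inE.
    by case: (y == a); case: (y == b); case: (y == c); case: (y == d).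
  have t1 : ~~ [&& e a b, e b c & e a c].
    by apply/negP => /and3P[x1 x2 x3]; exact: H4 aN bN cN x1 x2 x3.
  have t2 : ~~ [&& e a b, e b d & e a d].
    by apply/negP => /and3P[x1 x2 x3]; exact: H4 aN bN dN x1 x2 x3.
  have t3 : ~~ [&& e a c, e c d & e a d].
    by apply/negP => /and3P[x1 x2 x3]; exact: H4 aN cN dN x1 x2 x3.
  have t4 : ~~ [&& e b c, e c d & e b d].
    by apply/negP => /and3P[x1 x2 x3]; exact: H4 bN cN dN x1 x2 x3.
  have iC : [|| inC a, inC b, inC c | inC d].
    by move: uin; rewrite !inE => /or4P[]/eqP Eu; rewrite -Eu iu ?orbT.
  move: us; rewrite /= !inE !negb_or => /and4P[/and3P[ab ac ad] /andP[bc bd] cd _].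
  case/or3P: (bool_match h1 h2 h3 h4 t1 t2 t3 t4) => /andP[e1 e2].
  + apply: (@config a b c d) => //; first by move=> y; rewrite Hs !inE.
    by rewrite /= !inE !negb_or ab ac ad bc bd cd.
  + apply: (@config a c b d) => //.
    * by move=> y; rewrite Hs !inE; case: (y == a); case: (y == b); case: (y == c); case: (y == d).
    * by rewrite /= !inE !negb_or; do !(apply/andP; split) => //; rewrite eq_sym.
    * by move: iC; case: (inC a); case: (inC b); case: (inC c); case: (inC d).
  + apply: (@config a d b c) => //.
    * by move=> y; rewrite Hs !inE; case: (y == a); case: (y == b); case: (y == c); case: (y == d).
    * by rewrite /= !inE !negb_or; do !(apply/andP; split) => //; rewrite eq_sym.
    * by move: iC; case: (inC a); case: (inC b); case: (inC c); case: (inC d).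
Qed.

End Core.

Lemma main_thm : (tree_on e S \/ (connected_on e S /\
    exists c : seq T, unique_cycle_on e S c /\ size c != 3 /\ exists u, e v u && (u \in c))) ->
  #|N| <= 4 -> exists I F : {set T}, near_bipartite_coloring e I F /\ I \subset N.
Proof.
move=> [[_ forS] | [_ [C [UC [s3 [u Hu]]]]]] cardN.
- case: (boolP [exists u, e v u]) => [/existsP [u evu] | noN].
  + apply: (@core_main predT) => //.
    * move=> I _ c; apply/negP => /(is_cycle_sub (subsetDl _ _)) cyc.
      by move: (forS c); rewrite cyc.
    * by move=> P c x y PS cyc; move: (forS c); rewrite (is_cycle_sub PS cyc).
    * by exists u; rewrite evu.
    * by move=> x y z xN yN zN exy eyz exz; move: (forS [:: x; y; z]); rewrite tri_cycle.
  + exists set0, (~: set0); split; last exact: sub0set.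
    apply: good => //.
    * exact: sub0set.
    * by move=> y z; rewrite inE.
    * move=> c; apply/negP => /(is_cycle_sub (subsetDl _ _)) cyc.
      by move: (forS c); rewrite cyc.
    * by move=> r1 r2; rewrite inE => er1; move/existsPn: noN => /(_ r1); rewrite er1.
- apply: (@core_main (fun z => z \in C)) => //.
  + move=> I [y [yI yC]] c; apply/negP => cyc.
    have [Hz _] := uc_sub UC (subsetDl _ _) cyc.
    by have := Hz y yC; rewrite inE yI.
  + move=> P c x y PS cyc ce; have [Hz Hce] := uc_sub UC PS cyc; split => //.
    by have /andP[] := cycle_edge_mem (Hce _ _ ce).
  + by exists u.
  + move=> x y z xN yN zN exy eyz exz.
    have cyc := tri_cycle xN yN zN exy eyz exz.
    case: UC => /and3P [szC /andP[_ uC] _] HC.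
    have Hce := HC _ cyc.
    have sub : {subset C <= [:: x; y; z]}.
      move=> w wC; have := cycle_edge_next wC; rewrite -Hce.
      by case/cycle_edge_mem/andP.
    have := uniq_leq_size uC sub => /= le3.
    by move: s3; rewrite eqn_leq le3 szC.
Qed.

End Main.

Theorem lemma4p36 (T : finType) (e : rel T) (v : T)
    (e_sym : symmetric e) (e_irr : irreflexive e) :
  (tree_on e [set x | x != v] \/
   (connected_on e [set x | x != v] /\
    exists c : seq T, unique_cycle_on e [set x | x != v] c /\ size c != 3 /\
                      exists u, e v u && (u \in c))) ->
  #|[set u | e v u]| <= 4 ->
  exists I F : {set T},
    near_bipartite_coloring e I F /\ I \subset [set u | e v u].
Proof. exact: (main_thm e_sym e_irr). Qed.
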